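(* Let $n$ be a positive integer and $s$ a positive divisor of $n$. Let $D(n,s)$ be the set of positive divisors of $n$ that do not divide $s$, and let $M(n,s)$ be the square matrix with rows and columns indexed by $D(n,s)$ and $(d_1,d_2)$-entry $\gcd(d_1,d_2)-\gcd(d_1,d_2,s)$. Then $$\det M(n,s)=\prod_{d\in D(n,s)}\varphi(d),$$ where $\varphi$ is Euler's totient function. In particular, $M(n,s)$ is invertible.
   Context: The determinant of an empty matrix is taken to be $1$. *)

(* Defs.v *)
From HB Require Import structures.
From mathcomp Require Import all_boot all_order all_algebra.
Set Implicit Arguments. Unset Strict Implicit. Unset Printing Implicit Defensive.
Import Order.TTheory GRing.Theory Num.Theory.

Definition Dns (n s : nat) : seq nat := [seq d <- divisors n | ~~ (d %| s)].

Definition Mns (n s : nat) : 'M[rat]_(size (Dns n s)) :=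
  \matrix_(i, j) (((gcdn (nth 0%N (Dns n s) i) (nth 0%N (Dns n s) j))%:R
                  - (gcdn (gcdn (nth 0%N (Dns n s) i) (nth 0%N (Dns n s) j)) s)%:R) : rat).

(* Main.v *)
Require Import Defs.
From HB Require Import structures.
From mathcomp Require Import all_boot all_order all_algebra.
From mathcomp Require Import zify ring lra.
From mathcomp Require Import all_fingroup all_solvable.
Import Order.TTheory GRing.Theory Num.Theory.

Lemma sum_tot_divs n m : (0 < n)%N -> (0 < m)%N -> (m %| n)%N ->
  (\sum_(e <- divisors n | e %| m) totient e)%N = m.
Proof.
move=> n0 m0 mn.
rewrite -[RHS](sum_totient_dvd m) -[LHS]big_filter.
rewrite -(big_mkord (fun e => e %| m)) /index_iota subn0 -[RHS]big_filter.
apply: perm_big; apply: uniq_perm.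
- by apply: filter_uniq; apply: divisors_uniq.
- by apply: filter_uniq; apply: iota_uniq.
move=> x; rewrite !mem_filter mem_iota /= add0n -dvdn_divisors //.
case xm: (x %| m) => //=.
rewrite (dvdn_trans xm mn) ltnS dvdn_leq //.
Qed.

Lemma sum_tot_split n s g : (0 < n)%N -> (0 < s)%N -> (0 < g)%N -> (g %| n)%N ->
  (\sum_(e <- divisors n | ~~ (e %| s) && (e %| g)) totient e)%N = (g - gcdn g s)%N.
Proof.
move=> n0 s0 g0 gn.
have gs0 : (0 < gcdn g s)%N by rewrite gcdn_gt0 g0.
have gsn : (gcdn g s %| n)%N by apply: dvdn_trans (dvdn_gcdl _ _) gn.
have H : (\sum_(e <- divisors n | e %| g) totient e =
   \sum_(e <- divisors n | e %| gcdn g s) totient e +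
   \sum_(e <- divisors n | ~~ (e %| s) && (e %| g)) totient e)%N.
  rewrite (bigID (fun e => e %| s)) /=; congr (_ + _)%N; apply: eq_bigl => e.
    by rewrite dvdn_gcd.
  by rewrite andbC.
rewrite (@sum_tot_divs n g n0 g0 gn) (@sum_tot_divs n _ n0 gs0 gsn) in H.
lia.
Qed.

Local Open Scope ring_scope.

Theorem lemma4p5 (n s : nat) (hn : (0 < n)%N) (hs : (0 < s)%N) (hsn : (s %| n)%N) :
  \det (Mns n s) = \prod_(d <- Dns n s) ((totient d)%:R : rat)
  /\ Mns n s \in unitmx.
Proof.
set D := Dns n s.
set k := size D.
pose a (i : 'I_k) := nth 0%N D i.
have aD i : a i \in D by apply: mem_nth.
have Dn d : d \in D -> (d %| n)%N.
  by rewrite mem_filter -dvdn_divisors // => /andP[].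
have D0 d : d \in D -> (0 < d)%N.
  by move=> /Dn; apply: dvdn_gt0.
have an i : (a i %| n)%N by apply: Dn.
have a0 i : (0 < a i)%N by apply: D0.
pose Z : 'M[rat]_k := \matrix_(i, j) ((a j %| a i)%:R).
pose P : 'rV[rat]_k := \row_j ((totient (a j))%:R).
have EM : Mns n s = Z *m diag_mx P *m Z^T.
  apply/matrixP => i i'; rewrite mul_mx_diag !mxE -/D -/(a i) -/(a i').
  set g := gcdn (a i) (a i').
  have g0 : (0 < g)%N by rewrite gcdn_gt0 a0.
  have gn : (g %| n)%N by apply: dvdn_trans (dvdn_gcdl _ _) (an i).
  have -> : \sum_j (\matrix_(i0, j0) (Z i0 j0 * P 0 j0)) i j * Z^T j i'
      = \sum_j ((if (a j %| g)%N then totient (a j) else 0%N)%:R : rat).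
    apply: eq_bigr => j _; rewrite !mxE dvdn_gcd.
    by case: (a j %| a i)%N; case: (a j %| a i')%N; rewrite /= ?mul1r ?mulr1 ?mul0r ?mulr0.
  rewrite -natr_sum -big_mkcond /=.
  have -> : (\sum_(j < k | (a j %| g)%N) totient (a j))%N = (g - gcdn g s)%N.
    rewrite -(@sum_tot_split n s g hn hs g0 gn) -big_filter_cond.
    by rewrite (big_nth 0%N) big_mkord.
  by rewrite natrB // dvdn_leq // dvdn_gcdl.
have dZ : \det Z = 1.
  rewrite det_trig.
    by apply: big1 => i _; rewrite mxE dvdnn.
  apply/is_trig_mxP => i j ij; rewrite mxE.
  have sD : sorted ltn D by apply: sorted_filter; [exact: ltn_trans|exact: sorted_divisors_ltn].
  have lt : (a i < a j)%N.
    by apply: (sorted_ltn_nth ltn_trans 0%N sD); rewrite ?inE ?ltn_ord.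
  case h: (a j %| a i)%N => //.
  by have := dvdn_leq (a0 i) h; lia.
have dM : \det (Mns n s) = \prod_(d <- D) ((totient d)%:R : rat).
  rewrite EM !det_mulmx det_tr dZ mul1r mulr1 det_diag.
  rewrite (big_nth 0%N) big_mkord; apply: eq_bigr => i _; by rewrite mxE.
split => //.
rewrite unitmxE dM unitfE; rewrite prodf_seq_neq0; apply/allP => d dD /=.
by rewrite pnatr_eq0 -lt0n totient_gt0 D0.
Qed.
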